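(* Let $T$ be an infinite rooted ordered tree with root $\varnothing$, let $\lambda\in(1,\infty)$ and let $(Y_n)_{n\in\mathbb N}$ be the $\lambda$-biased random walk on $T$ (with arbitrary initial distribution). Assume $Y$ is recurrent. Then for all $\ell,n_1,n_2\in\mathbb N$ with $n_1<n_2$, $$\mathbf P\Big(|Y_{n_1}|+|Y_{n_2}|-2\min_{n_1\le n\le n_2}|Y_n|\ge2\ell+d_{\mathtt{gr}}(Y_{n_1},Y_{n_2})\Big)\le(n_2-n_1)\frac{\lambda-1}{\lambda^\ell-1}.$$
   Context: $\lambda$-biased random walk: from $x\ne\varnothing$ with $k_x(T)$ children, go to the parent w.p. $\lambda/(\lambda+k_x(T))$ and to each child w.p. $1/(\lambda+k_x(T))$; from $\varnothing$ go to each child w.p. $1/k_\varnothing(T)$. $|x|$ is the height of $x$ (graph distance to $\varnothing$), $d_{\mathtt{gr}}$ the graph distance on $T$. *)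

(* Defs.v *)
From HB Require Import structures.
From mathcomp Require Import all_boot all_order all_algebra.
From mathcomp Require Import all_classical all_reals all_analysis.
Set Implicit Arguments. Unset Strict Implicit. Unset Printing Implicit Defensive.
Import Order.TTheory GRing.Theory Num.Theory.
Local Open Scope classical_set_scope.
Local Open Scope ring_scope.

(* Ulam--Harris vertices: finite words of natural numbers; the root is [::].
   The i-th child (i = 0,1,...) of u is rcons u i. *)
Definition vertex := seq nat.

(* A rooted ordered (locally finite) tree is encoded by its out-degree
   function c : vertex -> nat; the tree is the set of words all of whose
   letters are below the out-degree of the corresponding prefix.
   (Values of c outside the tree are irrelevant.) *)
Definition in_tree (c : vertex -> nat) (v : vertex) : Prop :=
  forall i, (i < size v)%N -> (nth 0%N v i < c (take i v))%N.

Definition tree_set (c : vertex -> nat) : set vertex := [set v | in_tree c v].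

Definition infinite_tree (c : vertex -> nat) : Prop :=
  ~ finite_set (tree_set c).

Definition parent (x : vertex) : vertex := take (size x).-1 x.

Definition is_child (c : vertex -> nat) (x y : vertex) : bool :=
  [&& size y == (size x).+1, take (size x) y == x & (last 0%N y < c x)%N].

Definition lbrw_p {R : realType} (c : vertex -> nat) (lam : R) (x y : vertex) : R :=
  if x == [::] then (if is_child c x y then (c x)%:R^-1 else 0)
  else if is_child c x y then (lam + (c x)%:R)^-1
  else if y == parent x then lam / (lam + (c x)%:R)
  else 0.

Fixpoint lcp (u v : vertex) : vertex :=
  match u, v with
  | a :: u', b :: v' => if a == b then a :: lcp u' v' else [::]
  | _, _ => [::]
  end.

Definition dgr (u v : vertex) : nat := (size u + size v - 2 * size (lcp u v))%N.

Definition is_lbrw {R : realType} {d : measure_display} {Omega : measurableType d}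
  (P : probability Omega R) (c : vertex -> nat) (lam : R)
  (Y : nat -> Omega -> vertex) : Prop :=
  (forall n x, measurable (Y n @^-1` [set x])) /\
  (forall w, in_tree c (Y 0%N w)) /\
  (forall (x0 : vertex) (xs : seq vertex),
     P [set w : Omega | forall i, (i < (size xs).+1)%N -> Y i w = nth x0 (x0 :: xs) i]
     = (P [set w : Omega | Y 0%N w = x0] *
        (\prod_(i < size xs) lbrw_p c lam (nth x0 (x0 :: xs) i) (nth x0 xs i))%:E)%E).

Definition recurrent {R : realType} {d : measure_display} {Omega : measurableType d}
  (P : probability Omega R) (Y : nat -> Omega -> vertex) : Prop :=
  P [set w : Omega | forall N, exists n, (N <= n)%N /\ Y n w = [::]] = 1%E.

Definition min_height {Omega : Type} (Y : nat -> Omega -> vertex) (n1 n2 : nat)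
  (w : Omega) : nat :=
  \big[minn/size (Y n1 w)]_(n1 <= n < n2.+1) size (Y n w).

(* Main.v *)
Require Import Defs.
From HB Require Import structures.
From mathcomp Require Import all_boot all_order all_algebra.
From mathcomp Require Import all_classical all_reals all_analysis.
From mathcomp Require Import zify ring lra.
Import Order.TTheory GRing.Theory Num.Theory.
Set Implicit Arguments. Unset Strict Implicit. Unset Printing Implicit Defensive.

Ltac normsz := repeat match goal with
 | |- context [@size (Equality.sort ?T) ?s] => change (@size (Equality.sort T) s) with (@size nat s)
 | H : context [@size (Equality.sort ?T) ?s] |- _ => change (@size (Equality.sort T) s) with (@size nat s) in H
 end.
Ltac nlia := normsz; lia.

Lemma lcp_size (x y : vertex) : (size (lcp x y) <= size x)%N /\ (size (lcp x y) <= size y)%N.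
Proof.
elim: x y => [|a x IH] [|b y] //=. case: eqP => _ //=.
by case: (IH y) => h1 h2; split.
Qed.

Lemma lcp_take (x y : vertex) : take (size (lcp x y)) x = lcp x y /\ take (size (lcp x y)) y = lcp x y.
Proof.
elim: x y => [|a x IH] [|b y] //=. case: eqP => [->|_] //=.
by case: (IH y) => -> ->.
Qed.

Lemma lcp_ge (x y : vertex) k : (k <= size x)%N -> (k <= size y)%N -> take k x = take k y ->
  (k <= size (lcp x y))%N.
Proof.
elim: x y k => [|a x IH] [|b y] [|k] //=.
move=> hx hy [-> e]; rewrite eqxx /=. exact: IH.
Qed.

Lemma lcp_eq (x y : vertex) k : (k <= size (lcp x y))%N -> take k x = take k y.
Proof.
move=> hk; case: (lcp_take x y) => h1 h2.
have -> : take k x = take k (take (size (lcp x y)) x) by rewrite take_takel.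
have -> : take k y = take k (take (size (lcp x y)) y) by rewrite take_takel.
by rewrite h1 h2.
Qed.

Definition adj (c : vertex -> nat) (x y : vertex) : bool :=
  is_child c x y || ((x != [::]) && (y == parent x)).

Lemma adj_size c x y : adj c x y ->
  (size y = (size x).+1 /\ take (size x) y = x) \/ (size x = (size y).+1 /\ y = take (size y) x).
Proof.
case/orP.
  by case/and3P => /eqP h1 /eqP h2 _; left.
case/andP => hx /eqP ->; right.
have hs : (0 < size x)%N by case: x hx.
rewrite /parent size_takel ?leq_pred //; split => //; first by lia.
Qed.

Lemma adj_take c x y h : adj c x y -> (h <= size x)%N -> (h <= size y)%N -> take h y = take h x.
Proof.
case/adj_size => [[_ e]|[_ e]] hx hy.
  by rewrite -e take_takel // -{2}e size_takel // -e size_take; lia.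
by rewrite e take_takel.
Qed.

Lemma take_const c (f : nat -> vertex) h a b :
  (forall i, (a <= i < b)%N -> adj c (f i) (f i.+1)) ->
  (forall i, (a <= i <= b)%N -> (h <= size (f i))%N) ->
  forall i, (a <= i <= b)%N -> take h (f i) = take h (f a).
Proof.
move=> hadj hh; elim => [|i IH] hi.
  by have -> : a = 0%N by lia.
case: (ltngtP a i.+1) => hai; [|lia|by rewrite hai].
rewrite -IH; last by lia.
apply: adj_take; first (apply: hadj; lia); apply: hh; lia.
Qed.

Lemma bigmin_le (F : nat -> nat) x0 (r : seq nat) j : j \in r ->
  (\big[minn/x0]_(i <- r) F i <= F j)%N.
Proof.
elim: r => [|x r IH] //=; rewrite in_cons big_cons => /orP [/eqP ->|/IH h].
  exact: geq_minl.
exact: leq_trans (geq_minr _ _) h.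
Qed.

Lemma bigmin_att (F : nat -> nat) x0 (r : seq nat) :
  \big[minn/x0]_(i <- r) F i = x0 \/ exists2 i, i \in r & \big[minn/x0]_(i <- r) F i = F i.
Proof.
rewrite big_seq.
apply: (@big_ind nat (fun z => z = x0 \/ exists2 i, i \in r & z = F i) x0 minn); first by left.
  by move=> a b ha hb; case: (leqP a b).
by move=> i hi; right; exists i.
Qed.

Definition Gf (f : nat -> vertex) (l n1 N n : nat) : bool :=
  [&& prefix (f n) (f n1), (size (f n) + l <= size (f n1))%N,
      all (fun j => size (f n) < size (f j))%N (iota n.+1 (N - n))
    & prefix (take (size (f n) + l) (f n1)) (f N)].

Lemma comb_main c (f : nat -> vertex) l n1 N : (0 < l)%N -> (n1 < N)%N ->
  (forall i, (n1 <= i < N)%N -> adj c (f i) (f i.+1)) ->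
  (2 * l + dgr (f n1) (f N) + 2 * \big[minn/size (f n1)]_(n1 <= n < N.+1) size (f n)
     <= size (f n1) + size (f N))%N ->
  exists2 n, (n1 <= n < N)%N & Gf f l n1 N n.
Proof.
move=> l0 hN hadj.
set m := \big[minn/size (f n1)]_(n1 <= n < N.+1) size (f n) => hE.
have mle : forall i, (n1 <= i <= N)%N -> (m <= size (f i))%N.
  by move=> i hi; apply: bigmin_le; rewrite mem_index_iota; lia.
have matt : exists i, (n1 <= i <= N)%N && (size (f i) <= m)%N.
  case: (bigmin_att (fun n => size (f n)) (size (f n1)) (index_iota n1 N.+1)) => [h|[i hi h]].
    by rewrite -/m in h; exists n1; rewrite h; apply/andP; split; [lia|exact: leqnn].
  by rewrite -/m in h; exists i; move: hi; rewrite mem_index_iota h => hi; apply/andP; split; [lia|exact: leqnn].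
have ub : forall i, (n1 <= i <= N)%N && (size (f i) <= m)%N -> (i <= N)%N.
  by move=> i /andP[hi _]; lia.
case: (ex_maxnP matt ub) => t /andP[ht htm] hmax.
case: (lcp_size (f n1) (f N)) => lc1 lc2.
have key : (m + l <= size (lcp (f n1) (f N)))%N by rewrite /dgr in hE; lia.
have hmt : size (f t) = m by have := mle t ht; lia.
have htN : (t < N)%N.
  case: (ltngtP t N) => // htN; [lia | by move: htm; rewrite htN; lia].
exists t; first lia.
apply/and4P; split.
- rewrite prefixE hmt; apply/eqP.
  have hadj' : forall i, (n1 <= i < t)%N -> adj c (f i) (f i.+1).
    by move=> i hi; apply: hadj; lia.
  have hh : forall i, (n1 <= i <= t)%N -> (m <= size (f i))%N.
    by move=> i hi; apply: mle; lia.
  rewrite -(take_const hadj' hh (i := t)); last lia.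
  by rewrite -hmt take_size.
- lia.
- apply/allP => j; rewrite mem_iota => hj.
  rewrite hmt ltnNge; apply/negP => hjm.
  have : (n1 <= j <= N)%N && (size (f j) <= m)%N by rewrite hjm andbT; lia.
  move/hmax; lia.
- by rewrite hmt (lcp_eq key) prefix_take.
Qed.

Lemma lcp_par (x v : vertex) : (size (lcp (parent x) v) <= size (lcp x v))%N /\
   (size (lcp (parent x) v) <= (size x).-1)%N.
Proof.
have hp : size (parent x) = (size x).-1 by rewrite /parent size_takel // leq_pred.
case: (lcp_size (parent x) v); rewrite hp => h1 h2; split => //.
apply: lcp_ge; [lia|lia|].
rewrite -(lcp_eq (leqnn _)) /parent take_takel //.
Qed.

Lemma take_rcons_le (x : vertex) i k : (k <= size x)%N -> take k (rcons x i) = take k x.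
Proof. by move=> h; rewrite -cats1 takel_cat. Qed.

Lemma lcp_rcons (x v : vertex) i : (size (lcp (rcons x i) v) <= size (lcp x v))%N \/
  [/\ size (lcp x v) = size x, size (lcp (rcons x i) v) = (size x).+1 & i = nth 0%N v (size x)].
Proof.
case: (lcp_size (rcons x i) v); rewrite size_rcons => h1 h2.
case: (lcp_size x v) => h3 h4.
have e := lcp_eq (leqnn (size (lcp (rcons x i) v))).
case: (leqP (size (lcp (rcons x i) v)) (size x)) => hK.
  left; apply: lcp_ge; [lia|lia|].
  by rewrite -e take_rcons_le.
have hK' : size (lcp (rcons x i) v) = (size x).+1 by lia.
rewrite hK' take_oversize ?size_rcons // in e.
have ex : take (size x) v = x.
  by rewrite -(take_takel _ (leqnSn (size x))) -e take_rcons_le // take_size.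
right; split => //.
  apply/eqP; rewrite eqn_leq h3 /=; apply: lcp_ge; [lia|lia|].
  by rewrite ex take_size.
by rewrite -[in RHS](nth_take _ (ltnSn (size x))) -e nth_rcons ltnn eqxx.
Qed.

Fixpoint pathsS (S : seq vertex) (k : nat) : seq (seq vertex) :=
  if k is k'.+1 then [seq y :: b | y <- S, b <- pathsS S k'] else [:: [::]].

Lemma rcons_last_eq (x y : vertex) : size y = (size x).+1 -> take (size x) y = x ->
  y = rcons x (last 0%N y).
Proof.
case/lastP: y => [|y a] //; rewrite size_rcons => -[hs].
by rewrite -cats1 take_size_cat // => ->; rewrite cats1 last_rcons.
Qed.

Local Open Scope ring_scope.

Lemma lamc_gt0 (R : realType) (c : vertex -> nat) (lam : R) x : 1 < lam -> 0 < lam + (c x)%:R.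
Proof. move=> h; have h0 := ler0n R (c x); lra. Qed.

Lemma p_ge0 (R : realType) (c : vertex -> nat) (lam : R) x y : 1 < lam -> 0 <= lbrw_p c lam x y.
Proof.
move=> l1; have h := lamc_gt0 c x l1.
rewrite /lbrw_p; case: ifP => _.
  by case: ifP => _ //; rewrite invr_ge0.
case: ifP => _; first by rewrite invr_ge0 ltW.
case: ifP => _ //; rewrite divr_ge0 // ?ltW //; lra.
Qed.

Definition D (c : vertex -> nat) x : seq vertex := parent x :: [seq rcons x i | i <- iota 0 (c x)].

Lemma p_supp (R : realType) (c : vertex -> nat) (lam : R) x y : lbrw_p c lam x y != 0 -> y \in D c x.
Proof.
have hc : is_child c x y -> y \in D c x.
  case/and3P => /eqP h1 /eqP h2 h3; rewrite in_cons; apply/orP; right.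
  rewrite (rcons_last_eq h1 h2); apply: map_f; rewrite mem_iota; lia.
rewrite /lbrw_p; case: ifP => _.
  by case: ifP => h; [move=> _; exact: hc | rewrite eqxx].
case: ifP => h; first by move=> _; exact: hc.
case: ifP => [/eqP -> _|]; first by rewrite mem_head.
by rewrite eqxx.
Qed.

Lemma is_child_rcons (c : vertex -> nat) x i : (i < c x)%N -> is_child c x (rcons x i).
Proof.
move=> h; apply/and3P; split; rewrite ?size_rcons ?last_rcons //.
by rewrite -cats1 take_size_cat.
Qed.

Lemma p_child (R : realType) (c : vertex -> nat) (lam : R) x i : x != [::] -> (i < c x)%N ->
  lbrw_p c lam x (rcons x i) = (lam + (c x)%:R)^-1.
Proof. by move=> /negbTE hx h; rewrite /lbrw_p hx is_child_rcons. Qed.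

Lemma p_root_child (R : realType) (c : vertex -> nat) (lam : R) i : (i < c [::])%N ->
  lbrw_p c lam [::] (rcons [::] i) = (c [::])%:R^-1.
Proof. by move=> h; rewrite /lbrw_p eqxx is_child_rcons. Qed.

Lemma not_child_par (c : vertex -> nat) x : is_child c x (parent x) = false.
Proof.
apply/negbTE; apply/negP => /and3P [/eqP h _ _].
move: h; rewrite /parent size_take; case: ifP => _ h; lia.
Qed.

Lemma p_par (R : realType) (c : vertex -> nat) (lam : R) x : x != [::] ->
  lbrw_p c lam x (parent x) = lam / (lam + (c x)%:R).
Proof. by move=> /negbTE hx; rewrite /lbrw_p hx not_child_par eqxx. Qed.

Lemma p_root_par (R : realType) (c : vertex -> nat) (lam : R) : lbrw_p c lam [::] (parent [::]) = 0.
Proof. by rewrite /lbrw_p eqxx not_child_par. Qed.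

Lemma D_uniq c x : uniq (D c x).
Proof.
rewrite /D cons_uniq map_inj_uniq ?iota_uniq ?andbT; last exact: rcons_injr.
apply/mapP => -[i _ e]; move: (congr1 size e); rewrite size_rcons /parent size_take.
case: ifP => _ h; clear e; [have h2 : ((size x).-1 = (size x).+1)%N := h | have h2 : (size x = (size x).+1)%N := h]; lia.
Qed.

Lemma sumD (R : realType) (c : vertex -> nat) (lam : R) x (g : vertex -> R) :
  \sum_(y <- D c x) lbrw_p c lam x y * g y =
  lbrw_p c lam x (parent x) * g (parent x) +
  \sum_(i <- iota 0 (c x)) lbrw_p c lam x (rcons x i) * g (rcons x i).
Proof. by rewrite big_cons big_map. Qed.

Lemma sub_sum (R : realType) (S T : seq vertex) (f : vertex -> R) : uniq S -> uniq T ->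
  (forall y, y \notin T -> f y = 0) -> (forall y, 0 <= f y) ->
  \sum_(y <- S) f y <= \sum_(y <- T) f y.
Proof.
move=> uS uT f0 fge.
rewrite (bigID (fun y => y \in T)) /= [X in _ + X]big1 ?addr0; last first.
  by move=> y /f0.
rewrite -big_filter.
set S' := [seq y <- S | y \in T].
rewrite [X in _ <= X](bigID (fun y => y \in S')) /=.
have -> : \sum_(i <- T | i \in S') f i = \sum_(i <- S') f i.
  rewrite -big_filter; apply: perm_big; apply: uniq_perm.
  - exact: filter_uniq.
  - exact: filter_uniq.
  move=> y; rewrite mem_filter /S' mem_filter.
  by case: (y \in T); rewrite ?andbF ?andbT.
rewrite lerDl; apply: sumr_ge0 => y _; exact: fge.
Qed.

Lemma sum_iota_const (R : realType) k (a : R) : \sum_(i <- iota 0 k) a = a *+ k.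
Proof. by rewrite (_ : iota 0 k = index_iota 0 k) ?sumr_const_nat ?subn0 // /index_iota subn0. Qed.

Lemma sumD1 (R : realType) (c : vertex -> nat) (lam : R) x : 1 < lam ->
  \sum_(y <- D c x) lbrw_p c lam x y <= 1.
Proof.
move=> l1; rewrite /D big_cons big_map.
case: (eqVneq x [::]) => [->|hx].
  rewrite p_root_par add0r big_seq.
  rewrite (eq_bigr (fun _ => (c [::])%:R^-1)); last first.
    by move=> i; rewrite mem_iota => hi; rewrite p_root_child //; lia.
  rewrite -big_seq sum_iota_const.
  case: (c [::]) => [|n]; first by rewrite mulr0n.
  set a := (n.+1%:R)^-1; rewrite -mulr_natr /a.
  by rewrite mulVf // pnatr_eq0.
rewrite p_par // big_seq.
rewrite (eq_bigr (fun _ => (lam + (c x)%:R)^-1)); last first.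
  by move=> i; rewrite mem_iota => hi; rewrite p_child //; lia.
rewrite -big_seq sum_iota_const.
set a := (lam + (c x)%:R)^-1; rewrite -mulr_natr /a.
have h := lamc_gt0 c x l1.
rewrite [_^-1 * _]mulrC -mulrDl divff //; lra.
Qed.

Lemma rowsum (R : realType) (c : vertex -> nat) (lam : R) (S : seq vertex) x : 1 < lam -> uniq S ->
  \sum_(y <- S) lbrw_p c lam x y <= 1.
Proof.
move=> l1 uS; apply: le_trans (sumD1 c x l1).
apply: sub_sum => //; [exact: D_uniq| |by move=> y; exact: p_ge0].
by move=> y hy; apply/eqP; apply: contraNT hy; exact: p_supp.
Qed.

Definition fpot (R : realType) (lam : R) (l j : nat) : R := (lam ^+ j - 1) / (lam ^+ l - 1).
Definition ppi (u v y : vertex) : nat := if prefix u y then (size (lcp y v) - size u)%N else 0%N.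
Definition Fpot (R : realType) (lam : R) (l : nat) (u v y : vertex) : R := fpot lam l (ppi u v y).

Lemma den_gt0 (R : realType) (lam : R) l : 1 < lam -> (0 < l)%N -> 0 < lam ^+ l - 1.
Proof. move=> l1 l0; have := exprn_egt1 l l1; rewrite -lt0n l0 => h; lra. Qed.

Lemma fpot_mono (R : realType) (lam : R) l j k : 1 < lam -> (0 < l)%N -> (j <= k)%N ->
  fpot lam l j <= fpot lam l k.
Proof.
move=> l1 l0 hjk; rewrite /fpot ler_pM2r ?invr_gt0 ?den_gt0 //.
have := ler_eXn2l l1; move=> /(_ j k); rewrite hjk => h; lra.
Qed.

Lemma fpot0 (R : realType) (lam : R) l : fpot lam l 0 = 0.
Proof. by rewrite /fpot expr0 subrr mul0r. Qed.

Lemma fpotl (R : realType) (lam : R) l : 1 < lam -> (0 < l)%N -> fpot lam l l = 1.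
Proof. by move=> l1 l0; rewrite /fpot divff // gt_eqF // den_gt0. Qed.

Lemma fpot_ge0 (R : realType) (lam : R) l j : 1 < lam -> (0 < l)%N -> 0 <= fpot lam l j.
Proof. by move=> l1 l0; rewrite -(fpot0 lam l); apply: fpot_mono. Qed.

Lemma fpot_id (R : realType) (lam : R) l j :
  lam * fpot lam l j + (fpot lam l j.+2 - fpot lam l j.+1) = lam * fpot lam l j.+1.
Proof. rewrite /fpot !exprS; ring. Qed.

Lemma ind_le1 (R : realType) (r : seq nat) a : uniq r -> \sum_(i <- r) ((i == a)%:R : R) <= 1.
Proof.
elim: r => [|x r IH]; first by rewrite big_nil.
rewrite cons_uniq big_cons /= => /andP [hx ur].
case: (eqVneq x a) => [exa|nxa].
  rewrite big1_seq ?addr0 // => i /andP [_ hi].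
  by case: (eqVneq i a) => // eia; move: hx; rewrite exa -eia hi.
by rewrite add0r; exact: IH.
Qed.

Lemma prefix_par (u x : vertex) : prefix u (parent x) -> prefix u x.
Proof. by move=> h; apply: prefix_trans h _; exact: prefix_take. Qed.

Lemma prefix_rcons (u x : vertex) i : (size u <= size x)%N -> prefix u (rcons x i) = prefix u x.
Proof. by move=> h; rewrite !prefixE take_rcons_le. Qed.

Lemma superharm (R : realType) (c : vertex -> nat) (lam : R) (u v x : vertex) (l : nat) :
  1 < lam -> (0 < l)%N -> prefix u v -> size v = (size u + l)%N -> (size u < size x)%N ->
  \sum_(y <- D c x) lbrw_p c lam x y * Fpot lam l u v y <= Fpot lam l u v x.
Proof.
move=> l1 l0 puv sv hux.
have hx : x != [::] by case: x hux.
rewrite /D big_cons big_map p_par // big_seq.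
set q := (lam + (c x)%:R)^-1.
rewrite (eq_bigr (fun i => q * Fpot lam l u v (rcons x i))); last first.
  by move=> i; rewrite mem_iota => hi; rewrite p_child //; nlia.
rewrite -big_seq.
have hc := lamc_gt0 c x l1.
have q0 : 0 <= q by rewrite invr_ge0 ltW.
have hq : (lam + (c x)%:R) * q = 1 by rewrite mulfV // gt_eqF.
have hFge : forall y, 0 <= Fpot lam l u v y by move=> y; exact: fpot_ge0.
case: (boolP (prefix u x)) => pux; last first.
  have z1 : Fpot lam l u v x = 0 by rewrite /Fpot /ppi (negbTE pux) fpot0.
  have z2 : Fpot lam l u v (parent x) = 0.
    rewrite /Fpot /ppi; case: ifP => h; last exact: fpot0.
    by move: pux; rewrite (prefix_par h).
  rewrite z1 z2 mulr0 add0r big1_seq // => i _.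
  rewrite /Fpot /ppi prefix_rcons ?(ltnW hux) // (negbTE pux) fpot0 mulr0 //.
set L := size (lcp x v).
have hxv := lcp_size x v.
have hv : take (size u) v = u by apply/eqP; rewrite -prefixE.
have hxu : take (size u) x = u by apply/eqP; rewrite -prefixE.
have hL : (size u <= L)%N.
  apply: lcp_ge; [nlia|nlia|by rewrite hv hxu].
have ppx : ppi u v x = (L - size u)%N by rewrite /ppi pux.
have pupar : prefix u (parent x).
  by rewrite prefixE /parent take_takel ?hxu //; nlia.
have ppar : ppi u v (parent x) = (size (lcp (parent x) v) - size u)%N by rewrite /ppi pupar.
have hpar := lcp_par x v.
have ppch : forall i, ppi u v (rcons x i) = (size (lcp (rcons x i) v) - size u)%N.
  by move=> i; rewrite /ppi prefix_rcons ?pux // ltnW.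
case: (ltnP L (size x)) => hLx.
  (* off the path *)
  have bpar : Fpot lam l u v (parent x) <= Fpot lam l u v x.
    by rewrite /Fpot ppar ppx; apply: fpot_mono => //; nlia.
  have bch : forall i, Fpot lam l u v (rcons x i) <= Fpot lam l u v x.
    move=> i; rewrite /Fpot ppch ppx; apply: fpot_mono => //.
    case: (lcp_rcons x v i) => [h|[h _ _]]; nlia.
  apply: le_trans (_ : lam * q * Fpot lam l u v x + \sum_(i <- iota 0 (c x)) q * Fpot lam l u v x <= _).
    apply: lerD; first by apply: ler_wpM2l => //; rewrite mulr_ge0 // ltW //; lra.
    by apply: ler_sum => i _; apply: ler_wpM2l.
  rewrite sum_iota_const; set F := Fpot lam l u v x; rewrite -mulr_natr.
  have -> : lam * q * F + q * F * (c x)%:R = ((lam + (c x)%:R) * q) * F by ring.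
  by rewrite hq mul1r.
(* on the path *)
have eL : L = size x by have := hxv; nlia.
have [j' ej] : exists j', (L - size u)%N = j'.+1 by exists (L - size u).-1; nlia.
rewrite ej in ppx.
set a := nth 0%N v (size x).
set dl := fpot lam l j'.+2 - fpot lam l j'.+1.
have dl0 : 0 <= dl.
  have := fpot_mono l1 l0 (leqnSn j'.+1); rewrite /dl => h; lra.
have bpar : Fpot lam l u v (parent x) <= fpot lam l j'.
  by rewrite /Fpot ppar; apply: fpot_mono => //; nlia.
have bch : forall i, q * Fpot lam l u v (rcons x i) <= q * (fpot lam l j'.+1 + (i == a)%:R * dl).
  move=> i; apply: ler_wpM2l => //; rewrite /Fpot ppch.
  case: (lcp_rcons x v i) => [h|[h1 h2 h3]].
    apply: le_trans (_ : fpot lam l j'.+1 <= _).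
      by apply: fpot_mono => //; nlia.
    by rewrite lerDl mulr_ge0.
  have -> : (i == a) = true by rewrite h3 /a eqxx.
  rewrite mul1r addrC subrK.
  by apply: fpot_mono => //; nlia.
apply: le_trans (_ : lam * q * fpot lam l j' + \sum_(i <- iota 0 (c x)) q * (fpot lam l j'.+1 + (i == a)%:R * dl) <= _).
  apply: lerD; first by apply: ler_wpM2l => //; rewrite mulr_ge0 // ltW //; lra.
  exact: ler_sum.
rewrite -mulr_sumr big_split /= sum_iota_const -mulr_suml.
have hs := ind_le1 R a (iota_uniq 0 (c x)).
apply: le_trans (_ : lam * q * fpot lam l j' + q * (fpot lam l j'.+1 *+ c x + dl) <= _).
  apply: lerD => //; apply: ler_wpM2l => //; apply: lerD => //.
  by rewrite -[X in _ <= X]mul1r ler_wpM2r.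
rewrite /Fpot ppx.
have := fpot_id lam l j'; rewrite -/dl => hid.
rewrite -mulr_natr.
have -> : lam * q * fpot lam l j' + q * (fpot lam l j'.+1 * (c x)%:R + dl) =
          q * (lam * fpot lam l j' + dl) + q * (fpot lam l j'.+1 * (c x)%:R) by ring.
rewrite hid -mulrDr.
have -> : lam * fpot lam l j'.+1 + fpot lam l j'.+1 * (c x)%:R = (lam + (c x)%:R) * fpot lam l j'.+1 by ring.
by rewrite mulrA [q * _]mulrC hq mul1r.
Qed.

Fixpoint wt (R : realType) (c : vertex -> nat) (lam : R) (x : vertex) (t : seq vertex) : R :=
  if t is y :: t' then lbrw_p c lam x y * wt c lam y t' else 1.

Definition Kb (u v z : vertex) (b : seq vertex) : bool :=
  all (fun y => size u < size y)%N b && prefix v (last z b).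

Definition Vf (R : realType) (c : vertex -> nat) (lam : R) (S : seq vertex) (u v : vertex) k z : R :=
  \sum_(b <- pathsS S k) wt c lam z b * (Kb u v z b)%:R.

Lemma natr_andb (R : realType) (a b : bool) : ((a && b)%:R : R) = a%:R * b%:R.
Proof. by case: a; case: b; rewrite /= ?mulr1 ?mulr0 ?mul0r. Qed.

Lemma V_rec (R : realType) (c : vertex -> nat) (lam : R) S u v k z :
  Vf c lam S u v k.+1 z = \sum_(y <- S) lbrw_p c lam z y * ((size u < size y)%N%:R * Vf c lam S u v k y).
Proof.
rewrite /Vf /= big_allpairs_dep; apply: eq_bigr => y _.
rewrite !mulr_sumr; apply: eq_bigr => b _ /=.
rewrite /Kb /= -andbA natr_andb; ring.
Qed.

Lemma wt_ge0 (R : realType) (c : vertex -> nat) (lam : R) x t : 1 < lam -> 0 <= wt c lam x t.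
Proof. move=> l1; elim: t x => [|y t IH] x /=; first exact: ler01. by rewrite mulr_ge0 // p_ge0. Qed.

Lemma V_bound (R : realType) (c : vertex -> nat) (lam : R) S u v l :
  1 < lam -> (0 < l)%N -> prefix u v -> size v = (size u + l)%N -> uniq S ->
  forall k z, (size u < size z)%N -> Vf c lam S u v k z <= Fpot lam l u v z.
Proof.
move=> l1 l0 puv sv uS; elim => [|k IH] z hz.
  rewrite /Vf /= big_seq1 /= mul1r /Kb /=.
  case: (boolP (prefix v z)) => pvz; last by exact: fpot_ge0.
  have puz : prefix u z by apply: prefix_trans puv pvz.
  rewrite /Fpot /ppi puz -(fpotl l1 l0); apply: fpot_mono => //.
  have : (size v <= size (lcp z v))%N.
    move: pvz; rewrite prefixE => /eqP e.
    apply: lcp_ge; [|done|by rewrite e take_size].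
    by have := congr1 size e; rewrite size_take; case: ltnP => h1 h2; nlia.
  nlia.
rewrite V_rec.
apply: le_trans (_ : \sum_(y <- S) lbrw_p c lam z y * Fpot lam l u v y <= _).
  apply: ler_sum => y _; apply: ler_wpM2l; first exact: p_ge0.
  case: (ltnP (size u) (size y)) => h; first by rewrite mul1r; exact: IH.
  by rewrite mul0r; exact: fpot_ge0.
apply: le_trans (superharm c l1 l0 puv sv hz).
apply: sub_sum => //; first exact: D_uniq.
  move=> y hy; suff -> : lbrw_p c lam z y = 0 by rewrite mul0r.
  by apply/eqP; apply: contraNT hy; exact: p_supp.
by move=> y; rewrite mulr_ge0 ?p_ge0 ?fpot_ge0.
Qed.

Lemma D_size c x y : y \in D c x -> (size y <= (size x).+1)%N.
Proof.
rewrite in_cons => /orP [/eqP ->|/mapP [i _ ->]].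
  by rewrite /parent size_take; case: ifP => _; nlia.
by rewrite size_rcons.
Qed.

Lemma V_top (R : realType) (c : vertex -> nat) (lam : R) S u v l k :
  1 < lam -> (0 < l)%N -> prefix u v -> size v = (size u + l)%N -> uniq S ->
  Vf c lam S u v k.+1 u <= fpot lam l 1.
Proof.
move=> l1 l0 puv sv uS; rewrite V_rec.
apply: le_trans (_ : \sum_(y <- S) lbrw_p c lam u y * fpot lam l 1 <= _).
  apply: ler_sum => y _.
  case: (eqVneq (lbrw_p c lam u y) 0) => [->|hp]; first by rewrite !mul0r.
  apply: ler_wpM2l; first exact: p_ge0.
  case: (ltnP (size u) (size y)) => h; last by rewrite mul0r; exact: fpot_ge0.
  rewrite mul1r; apply: le_trans (V_bound c l1 l0 puv sv uS k h) _.
  rewrite /Fpot; apply: fpot_mono => //.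
  have := D_size (p_supp hp); have := lcp_size y v; rewrite /ppi; case: ifP => _ ? ?; nlia.
rewrite -mulr_suml -[X in _ <= X]mul1r; apply: ler_wpM2r; first exact: fpot_ge0.
exact: rowsum.
Qed.

Lemma mem_pathsS (S : seq vertex) k s : (s \in pathsS S k) = (size s == k) && all (fun x => x \in S) s.
Proof.
elim: k s => [|k IH] s /=; first by rewrite mem_seq1; case: s.
apply/allpairsP/idP => [[[y b] /= [hy hb ->]]|].
  by move: hb; rewrite IH => /andP [h1 h2]; rewrite /= eqSS h1 hy h2.
case: s => [|y b] //=; rewrite eqSS => /andP [hs /andP [hy hb]].
by exists (y, b); split => //=; rewrite IH hs.
Qed.

Lemma uniq_pathsS (S : seq vertex) k : uniq S -> uniq (pathsS S k).
Proof.
move=> uS; elim: k => [|k IH] //=.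
apply: allpairs_uniq => // -[y1 b1] [y2 b2] _ _ /= [-> ->] //.
Qed.

Lemma sum_pathsS_cat (R : realType) (S : seq vertex) m k (g : seq vertex -> R) :
  \sum_(s <- pathsS S (m + k)) g s = \sum_(a <- pathsS S m) \sum_(b <- pathsS S k) g (a ++ b).
Proof.
elim: m g => [|m IH] g; first by rewrite add0n /= big_seq1.
rewrite addSn /= !big_allpairs_dep; apply: eq_bigr => y _.
exact: (IH (fun s => g (y :: s))).
Qed.

Lemma wt_cat (R : realType) (c : vertex -> nat) (lam : R) x a b :
  wt c lam x (a ++ b) = wt c lam x a * wt c lam (last x a) b.
Proof. by elim: a x => [|y a IH] x /=; rewrite ?mul1r // IH mulrA. Qed.

Lemma wt_prod (R : realType) (c : vertex -> nat) (lam : R) x0 xs :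
  \prod_(i < size xs) lbrw_p c lam (nth x0 (x0 :: xs) i) (nth x0 xs i) = wt c lam x0 xs.
Proof.
elim: xs x0 => [|y xs IH] x0 /=; first by rewrite big_ord0.
rewrite big_ord_recl /= -(IH y); congr (_ * _); apply: eq_bigr => i _.
have hi := ltn_ord i; rewrite add0n.
by congr (lbrw_p _ _ _ _); apply: set_nth_default => //=; rewrite ltnW.
Qed.

Lemma wt_path (R : realType) (c : vertex -> nat) (lam : R) x t :
  wt c lam x t != 0 -> path (adj c) x t.
Proof.
elim: t x => [|y t IH] x //=; rewrite mulf_eq0 negb_or => /andP [hp hw].
rewrite IH // andbT /adj.
move: hp; rewrite /lbrw_p; case: ifP => hx.
  by case: ifP => //; rewrite eqxx.
case: ifP => [h _|_]; first by rewrite ?h.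
case: ifP => [h _|]; first by rewrite ?h ?orbT.
by rewrite eqxx.
Qed.

Definition pwt (R : realType) (c : vertex -> nat) (lam : R) (mu0 : vertex -> R) (s : seq vertex) : R :=
  if s is x :: t then mu0 x * wt c lam x t else 0.

Definition Ep (l n1 N : nat) (s : seq vertex) : bool :=
  (2 * l + dgr (nth [::] s n1) (nth [::] s N) +
   2 * \big[minn/size (nth [::] s n1)]_(n1 <= n < N.+1) size (nth [::] s n)
     <= size (nth [::] s n1) + size (nth [::] s N))%N.

Lemma pwt_ge0 (R : realType) (c : vertex -> nat) (lam : R) mu0 s :
  1 < lam -> (forall x, 0 <= mu0 x) -> 0 <= pwt c lam mu0 s.
Proof. by move=> l1 m0; case: s => [|x t] //=; rewrite mulr_ge0 ?wt_ge0. Qed.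

Lemma sum_ge_term (R : realType) (r : seq nat) (F : nat -> R) j :
  uniq r -> j \in r -> (forall i, 0 <= F i) -> F j <= \sum_(i <- r) F i.
Proof.
move=> ur hj F0; rewrite (bigD1_seq j) //= lerDl; apply: sumr_ge0 => i _; exact: F0.
Qed.

Lemma Gf_cat (x : vertex) (a' b : seq vertex) l n1 N n :
  size a' = n -> size b = (N - n)%N -> (n1 <= n < N)%N ->
  Gf (nth [::] ((x :: a') ++ b)) l n1 N n =
  (prefix (last x a') (nth [::] (x :: a') n1) &&
    (size (last x a') + l <= size (nth [::] (x :: a') n1))%N) &&
  Kb (last x a') (take (size (last x a') + l) (nth [::] (x :: a') n1)) (last x a') b.
Proof.
move=> ha hb hn.
have e1 : nth [::] ((x :: a') ++ b) n = last x a'.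
  by rewrite nth_cat /= ltnS ha leqnn (last_nth [::]) ha.
have e2 : nth [::] ((x :: a') ++ b) n1 = nth [::] (x :: a') n1.
  by rewrite nth_cat /= ltnS ha; case: ifP => //; lia.
have e3 : nth [::] ((x :: a') ++ b) N = last (last x a') b.
  have hs : size ((x :: a') ++ b) = N.+1 by rewrite size_cat /= ha hb; lia.
  have -> : N = (size ((x :: a') ++ b)).-1 by rewrite hs.
  by rewrite nth_last last_cat.
have e4 : [seq nth [::] ((x :: a') ++ b) j | j <- iota n.+1 (N - n)] = b.
  rewrite map_nth_iota; last by rewrite size_cat /= ha hb; lia.
  by rewrite drop_size_cat /= ?ha // take_oversize ?hb.
have e5 : all (fun j => size (last x a') < size (nth [::] ((x :: a') ++ b) j))%N (iota n.+1 (N - n))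
  = all (fun y => size (last x a') < size y)%N b by rewrite -[in RHS]e4 all_map.
rewrite /Gf /Kb e1 e2 e3 e5.
by rewrite -!andbA.
Qed.

Lemma sum_main (R : realType) (c : vertex -> nat) (lam : R) (mu0 : vertex -> R) S l n1 N :
  1 < lam -> (0 < l)%N -> (n1 < N)%N -> uniq S -> (forall x, 0 <= mu0 x) ->
  (forall n, \sum_(a <- pathsS S n.+1) pwt c lam mu0 a <= 1) ->
  \sum_(s <- pathsS S N.+1) (Ep l n1 N s)%:R * pwt c lam mu0 s <= (N - n1)%:R * fpot lam l 1.
Proof.
move=> l1 l0 hN uS m0 hsum.
have pw0 := fun s => pwt_ge0 c s l1 m0.
apply: le_trans (_ : \sum_(s <- pathsS S N.+1) \sum_(n <- index_iota n1 N)
   (Gf (nth [::] s) l n1 N n)%:R * pwt c lam mu0 s <= _).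
  rewrite big_seq [X in _ <= X]big_seq; apply: ler_sum => s.
  rewrite mem_pathsS => /andP [/eqP hs _].
  case: (boolP (Ep l n1 N s)) => hE; last first.
    by rewrite mul0r; apply: sumr_ge0 => i _; rewrite mulr_ge0.
  case: (eqVneq (pwt c lam mu0 s) 0) => [->|hp].
    by rewrite mulr0; apply: sumr_ge0 => i _; rewrite mulr0.
  case: s hs hE hp => [|x t] // [ht] hE hp.
  have hw : wt c lam x t != 0 by move: hp; rewrite /= mulf_eq0 negb_or => /andP [].
  have /(pathP [::]) hpath := wt_path hw.
  have hadj : forall i, (n1 <= i < N)%N -> adj c (nth [::] (x :: t) i) (nth [::] (x :: t) i.+1).
    by move=> i hi; apply: hpath; rewrite ht; lia.
  case: (comb_main l0 hN hadj hE) => n hn hG.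
  rewrite mul1r.
  apply: le_trans (_ : (Gf (nth [::] (x :: t)) l n1 N n)%:R * pwt c lam mu0 (x :: t) <= _).
    by rewrite hG mul1r.
  apply: sum_ge_term; [exact: iota_uniq | by rewrite mem_index_iota | by move=> i; rewrite mulr_ge0].
rewrite exchange_big.
apply: le_trans (_ : \sum_(n <- index_iota n1 N) fpot lam l 1 <= _); last first.
  by rewrite sumr_const_nat mulr_natl.
rewrite big_seq [X in _ <= X]big_seq; apply: ler_sum => n; rewrite mem_index_iota => hn.
rewrite (_ : N.+1 = n.+1 + (N - n))%N; last by lia.
rewrite sum_pathsS_cat.
apply: le_trans (_ : \sum_(a <- pathsS S n.+1) pwt c lam mu0 a * fpot lam l 1 <= _); last first.
  rewrite -mulr_suml -[X in _ <= X]mul1r; apply: ler_wpM2r; [exact: fpot_ge0|exact: hsum].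
rewrite big_seq [X in _ <= X]big_seq; apply: ler_sum => a.
rewrite mem_pathsS => /andP [/eqP ha _].
case: a ha => [|x a'] // [ha].
set z := last x a'.
set x1 := nth [::] (x :: a') n1.
set v := take (size z + l) x1.
have -> : \sum_(b <- pathsS S (N - n)) (Gf (nth [::] ((x :: a') ++ b)) l n1 N n)%:R *
            pwt c lam mu0 ((x :: a') ++ b) =
          (prefix z x1 && (size z + l <= size x1)%N)%:R * (mu0 x * wt c lam x a') *
            Vf c lam S z v (N - n) z.
  rewrite /Vf mulr_sumr big_seq [in RHS]big_seq; apply: eq_bigr => b.
  rewrite mem_pathsS => /andP [/eqP hb _].
  rewrite Gf_cat //= wt_cat natr_andb -/z; ring.
case: (boolP (prefix z x1 && (size z + l <= size x1)%N)) => hC; last first.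
  by rewrite !mul0r; apply: mulr_ge0; [exact: pw0 | exact: fpot_ge0].
case/andP: hC => pz hz.
rewrite mul1r /=; apply: ler_wpM2l; first by rewrite mulr_ge0 ?wt_ge0.
have hk : (N - n = (N - n).-1.+1)%N by lia.
rewrite hk; apply: V_top => //.
- by rewrite prefixE /v take_takel ?leq_addr // -prefixE.
- by rewrite /v size_takel.
Qed.

Local Open Scope classical_set_scope.

Definition traj (Omega : Type) (Y : nat -> Omega -> vertex) k (w : Omega) : seq vertex :=
  mkseq (fun i => Y i w) k.

Lemma cyl_meas d (Omega : measurableType d) (Y : nat -> Omega -> vertex) :
  (forall n x, measurable (Y n @^-1` [set x])) ->
  forall k s, measurable [set w | traj Y k w = s].
Proof.
move=> hm; elim => [|k IH] s.
  case: s => [|x s].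
    rewrite (_ : [set w | traj Y 0 w = [::]] = setT); first exact: measurableT.
    by apply/seteqP; split.
  rewrite (_ : [set w | traj Y 0 w = x :: s] = set0); first exact: measurable0.
  by apply/seteqP; split.
case/lastP: s => [|s a].
  rewrite (_ : [set w | traj Y k.+1 w = [::]] = set0); first exact: measurable0.
  by apply/seteqP; split => // w; rewrite /= /traj mkseqS; case: (mkseq _ _).
rewrite (_ : [set w | traj Y k.+1 w = rcons s a] = [set w | traj Y k w = s] `&` (Y k @^-1` [set a])).
  by apply: measurableI; [exact: IH | exact: hm].
apply/seteqP; split => w /=; rewrite /traj mkseqS.
  by move/rcons_inj => [-> ->].
by case=> -> ->.
Qed.

Lemma U_meas d (Omega : measurableType d) (Y : nat -> Omega -> vertex) :
  (forall n x, measurable (Y n @^-1` [set x])) ->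
  forall k (L : seq (seq vertex)), measurable [set w | traj Y k w \in L].
Proof.
move=> hm k; elim => [|s L IH].
  rewrite (_ : [set w | traj Y k w \in [::]] = set0); first exact: measurable0.
  by apply/seteqP; split.
rewrite (_ : [set w | traj Y k w \in s :: L] = [set w | traj Y k w = s] `|` [set w | traj Y k w \in L]).
  by apply: measurableU => //; exact: cyl_meas.
apply/seteqP; split => w /=; rewrite in_cons.
  by case/orP => [/eqP ->|h]; [left|right].
by case=> [->|->]; rewrite ?eqxx ?orbT.
Qed.

Lemma cyl_prob (R : realType) d (Omega : measurableType d) (P : probability Omega R)
  (c : vertex -> nat) (lam : R) (Y : nat -> Omega -> vertex) x xs :
  is_lbrw P c lam Y ->
  P [set w | traj Y (size xs).+1 w = x :: xs] =
  (fine (P [set w | Y 0%N w = x]) * wt c lam x xs)%:E.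
Proof.
case=> hm [_ hp].
have -> : [set w | traj Y (size xs).+1 w = x :: xs] =
          [set w | forall i, (i < (size xs).+1)%N -> Y i w = nth x (x :: xs) i].
  apply/seteqP; split => w /=.
    by move=> e i hi; rewrite -e /traj nth_mkseq.
  move=> h; apply: (@eq_from_nth _ x); first by rewrite size_mkseq.
  by move=> i; rewrite size_mkseq => hi; rewrite nth_mkseq // h.
rewrite hp EFinM fineK ?wt_prod //.
exact: (fin_num_measure P _ (hm 0%N x)).
Qed.

Lemma U_prob (R : realType) d (Omega : measurableType d) (P : probability Omega R)
  (c : vertex -> nat) (lam : R) (Y : nat -> Omega -> vertex) k (L : seq (seq vertex)) :
  is_lbrw P c lam Y -> uniq L -> all (fun s => size s == k.+1) L ->
  P [set w | traj Y k.+1 w \in L] =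
  (\sum_(s <- L) pwt c lam (fun x => fine (P [set w | Y 0%N w = x])) s)%:E.
Proof.
move=> hY; have hm := hY.1.
elim: L => [|s L IH] /=.
  rewrite big_nil (_ : [set w | traj Y k.+1 w \in [::]] = set0) ?measure0 //.
  by apply/seteqP; split.
case/andP => hs uL /andP [/eqP ss aL].
rewrite (_ : [set w | traj Y k.+1 w \in s :: L] = [set w | traj Y k.+1 w = s] `|` [set w | traj Y k.+1 w \in L]); last first.
  apply/seteqP; split => w /=; rewrite in_cons.
    by case/orP => [/eqP ->|h]; [left|right].
  by case=> [->|->]; rewrite ?eqxx ?orbT.
have hU : P ([set w | traj Y k.+1 w = s] `|` [set w | traj Y k.+1 w \in L]) =
   (P [set w | traj Y k.+1 w = s] + P [set w | traj Y k.+1 w \in L])%E.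
  apply: measureU; first exact: cyl_meas.
    exact: U_meas.
  apply/seteqP; split => w //= [e1 e2]; by move: hs; rewrite -e1 e2.
rewrite hU.
rewrite (IH uL aL) big_cons EFinD; congr (_ + _)%E.
clear hU; case: s ss hs => [|x xs] //= [ss] _.
by rewrite -ss (cyl_prob _ _ hY).
Qed.

Fixpoint words (A : seq nat) k : seq (seq nat) :=
  if k is k'.+1 then [seq a :: w | a <- A, w <- words A k'] else [:: [::]].

Lemma mem_words (A : seq nat) k s : (s \in words A k) = (size s == k) && all (fun x => x \in A) s.
Proof.
elim: k s => [|k IH] s /=; first by rewrite mem_seq1; case: s.
apply/allpairsP/idP => [[[y b] /= [hy hb ->]]|].
  by move: hb; rewrite IH => /andP [h1 h2]; rewrite /= eqSS h1 hy h2.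
case: s => [|y b] //=; rewrite eqSS => /andP [hs /andP [hy hb]].
by exists (y, b); split => //=; rewrite IH hs.
Qed.

Definition vcover M : seq vertex := undup (flatten [seq words (iota 0 M) k | k <- iota 0 M.+1]).
Definition inS M (x : vertex) : bool := (size x <= M)%N && all (fun i => i < M)%N x.

Lemma vcover_uniq M : uniq (vcover M).
Proof. exact: undup_uniq. Qed.

Lemma mem_vcover M x : (x \in vcover M) = inS M x.
Proof.
rewrite mem_undup; apply/flatten_mapP/idP.
  case=> k; rewrite mem_iota mem_words => hk /andP [/eqP hs ha].
  apply/andP; split; first by rewrite hs; nlia.
  by apply: sub_all ha => i; rewrite mem_iota.
case/andP => hs ha; exists (size x); first by rewrite mem_iota; nlia.
rewrite mem_words eqxx /=; apply: sub_all ha => i; rewrite mem_iota; nlia.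
Qed.

Lemma inS_mono M M' x : (M <= M')%N -> inS M x -> inS M' x.
Proof.
move=> hM /andP [hs ha]; apply/andP; split; first nlia.
by apply: sub_all ha => i /= hi; nlia.
Qed.

Lemma mem_le_sumn (x : seq nat) i : i \in x -> (i <= sumn x)%N.
Proof.
elim: x => [|a x IH] //=; rewrite in_cons => /orP [/eqP ->|/IH h]; nlia.
Qed.

Lemma inS_ex_seq (t : seq vertex) : exists M, all (inS M) t.
Proof.
elim: t => [|x t [M hM]]; first by exists 0%N.
exists (maxn M (size x + sumn x + 1)); rewrite /=; apply/andP; split.
  apply/andP; split; first nlia.
  by apply/allP => i /mem_le_sumn; nlia.
by apply: sub_all hM => y; apply: inS_mono; exact: leq_maxl.
Qed.

Lemma E_traj (Omega : Type) (Y : nat -> Omega -> vertex) l n1 n2 w : (n1 < n2)%N ->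
  (2 * l + dgr (Y n1 w) (Y n2 w) + 2 * min_height Y n1 n2 w <= size (Y n1 w) + size (Y n2 w))%N
  = Ep l n1 n2 (traj Y n2.+1 w).
Proof.
move=> h; rewrite /Ep /traj /min_height !nth_mkseq //; last nlia.
congr (_ + _ * _ <= _)%N; apply: eq_big_nat => i hi; rewrite nth_mkseq //; nlia.
Qed.

Local Open Scope ring_scope.

Theorem lemma3p17 (R : realType) (d : measure_display) (Omega : measurableType d)
  (P : probability Omega R) (c : vertex -> nat) (lam : R)
  (Y : nat -> Omega -> vertex) :
  infinite_tree c -> 1 < lam -> is_lbrw P c lam Y -> recurrent P Y ->
  forall (l n1 n2 : nat), (n1 < n2)%N ->
  (P [set w : Omega | (2 * l + dgr (Y n1 w) (Y n2 w) + 2 * min_height Y n1 n2 w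
               <= size (Y n1 w) + size (Y n2 w))%N]
   * (lam ^+ l - 1)%:E
   <= ((n2 - n1)%:R * (lam - 1))%:E)%E.
Proof.
move=> _ l1 hY _ l n1 n2 hn.
have hm := hY.1.
case: (posnP l) => [->|l0].
  rewrite expr0 subrr mule0 lee_fin; apply: mulr_ge0; first exact: ler0n.
  by rewrite subr_ge0 ltW.
set mu0 := fun x => fine (P [set w | Y 0%N w = x]).
have m0 : forall x, 0 <= mu0 x by move=> x; apply: fine_ge0; exact: measure_ge0.
have hsum1 : forall S, uniq S -> forall n, \sum_(a <- pathsS S n.+1) pwt c lam mu0 a <= 1.
  move=> S uS n; rewrite -lee_fin -(U_prob (k := n) hY (uniq_pathsS n.+1 uS)).
    exact: probability_le1 (U_meas hm _ _).
  by apply/allP => s; rewrite mem_pathsS => /andP [/eqP -> _].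
set bound := ((n2 - n1)%:R * fpot lam l 1).
pose EM := fun M => [set w | traj Y n2.+1 w \in [seq s <- pathsS (vcover M) n2.+1 | Ep l n1 n2 s]].
have EMle : forall M, (P (EM M) <= bound%:E)%E.
  move=> M; rewrite /EM (U_prob (k := n2) hY); [|by apply: filter_uniq; apply: uniq_pathsS; exact: vcover_uniq|by apply/allP => s; rewrite mem_filter mem_pathsS => /andP [_ /andP [/eqP -> _]]].
  rewrite lee_fin big_filter big_mkcond.
  rewrite (eq_bigr (fun s => (Ep l n1 n2 s)%:R * pwt c lam mu0 s)); last first.
    by move=> s _; case: (Ep l n1 n2 s); rewrite ?mul1r ?mul0r.
  apply: sum_main => //; try exact: vcover_uniq; exact: (hsum1 _ (vcover_uniq M)).
have EMmeas : forall M, measurable (EM M) by move=> M; exact: U_meas.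
have EMmono : {homo EM : n m / (n <= m)%N >-> (n <= m)%O}.
  move=> M M' hMM'; rewrite subsetEset => w; rewrite /EM /= -/(pathsS (vcover M) n2.+1) -/(pathsS (vcover M') n2.+1).
  rewrite !mem_filter !mem_pathsS => /andP [hE /andP [hs ha]].
  rewrite hE hs !andTb; apply: sub_all ha => x; rewrite !mem_vcover; exact: inS_mono hMM'.
have EMcup : \bigcup_M EM M = [set w : Omega | (2 * l + dgr (Y n1 w) (Y n2 w) + 2 * min_height Y n1 n2 w
               <= size (Y n1 w) + size (Y n2 w))%N].
  apply/seteqP; split => w /=.
    by case=> M _; rewrite /EM /= mem_filter => /andP [hE _]; rewrite E_traj.
  move=> hE; have [M hM] := inS_ex_seq (traj Y n2.+1 w); exists M => //.
  rewrite /EM /= -/(pathsS (vcover M) n2.+1) mem_filter mem_pathsS -E_traj // hE size_mkseq eqxx !andTb.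
  by apply: sub_all hM => x; rewrite mem_vcover.
have hcv := @nondecreasing_cvg_mu _ _ _ P EM EMmeas (bigcupT_measurable _ EMmeas) EMmono.
have PE : (P (\bigcup_M EM M) <= bound%:E)%E.
  apply: (cvge_to_le hcv); exact: nearW.
rewrite EMcup in PE.
move: PE; set pE := P _ => PE.
have hfin : pE \is a fin_num.
  by rewrite ge0_fin_numE ?measure_ge0 // (le_lt_trans PE) ?ltry.
rewrite -(fineK hfin) -EFinM lee_fin.
move: PE; rewrite -(fineK hfin) lee_fin /bound /fpot expr1 => PE.
have hD := den_gt0 l1 l0.
apply: le_trans (ler_wpM2r (ltW hD) PE) _.
by rewrite -mulrA mulfVK // gt_eqF.
Qed.
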